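(* Let $m\ge1$. For any $x=(x_0,\dots,x_m)\in\mathbb{R}^{m+1}$, $$\sum_{i=0}^{2m}(x*x)_i=\Big(\sum_{i=0}^{m}x_i\Big)^2.$$ Moreover, if $y\in\mathbb{R}^{2m+1}_+$ and $x^\star\in\mathbb{R}^{m+1}_+$ is a minimizer of $x\mapsto\mathcal{I}(y\|x*x)$ over $\mathbb{R}^{m+1}_+$, then $$\sum_{i=0}^{2m}(x^\star*x^\star)_i=\Big(\sum_{i=0}^{m}x^\star_i\Big)^2=\sum_{i=0}^{2m}y_i.$$
   Context: For $x\in\mathbb{R}^{m+1}$ set $x_k=0$ for $k<0$ and $k>m$, and $(x*x)_i=\sum_{j=0}^{i}x_{i-j}x_j$ for $i=0,\dots,2m$. For nonnegative vectors $u,v$ of equal length, $\mathcal{I}(u\|v)=\sum_i\big(u_i\log\frac{u_i}{v_i}-u_i+v_i\big)$ if $u_i=0$ whenever $v_i=0$ (convention $0\log0=0$), and $+\infty$ otherwise. *)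

(* Defs.v *)
From HB Require Import structures.
From mathcomp Require Import all_boot all_order all_algebra.
From mathcomp Require Import all_classical all_reals all_analysis.
Set Implicit Arguments. Unset Strict Implicit. Unset Printing Implicit Defensive.
Import Order.TTheory GRing.Theory Num.Theory.
Local Open Scope ring_scope.

(* Zero extension of x in R^{m+1} (indices 0..m) to all of nat:
   x_k = 0 for k > m (negative indices never arise below since i - j >= 0). *)
Definition ext (R : realType) (m : nat) (x : 'I_m.+1 -> R) (k : nat) : R :=
  match ltnP k m.+1 with
  | LtnNotGeq Hk => x (Ordinal Hk)
  | _ => 0
  end.

Definition selfconv (R : realType) (m : nat) (x : 'I_m.+1 -> R) : 'I_(m.*2).+1 -> R :=
  fun i => \sum_(j < i.+1) ext x (i - j) * ext x j.

Definition Idiv (R : realType) (n : nat) (u v : 'I_n -> R) : \bar R :=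
  if [forall i, (v i == 0) ==> (u i == 0)] then
    (\sum_(i < n) ((if u i == 0 then 0 else u i * ln (u i / v i)) - u i + v i))%:E
  else +oo%E.

(* Main.v *)
Require Import Defs.
From HB Require Import structures.
From mathcomp Require Import all_boot all_order all_algebra.
From mathcomp Require Import all_classical all_reals all_analysis.
From mathcomp Require Import ring lra zify.
Import Order.TTheory GRing.Theory Num.Theory.
Local Open Scope ring_scope.

Section H.
Variables (R : realType) (m : nat).
Implicit Types (x : 'I_m.+1 -> R).

Lemma ext_ord x (i : 'I_m.+1) : ext x i = x i.
Proof.
rewrite /ext; case: ltnP => [H|H]; first by congr x; apply: val_inj.
by move: (ltn_ord i); rewrite ltnNge H.
Qed.

Lemma ext_out x k : (m.+1 <= k)%N -> ext x k = 0.
Proof. by rewrite /ext; case: ltnP => // H; rewrite leqNgt H. Qed.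

Lemma ext_scale t x k : ext (fun i => t * x i) k = t * ext x k.
Proof. by rewrite /ext; case: ltnP => //; rewrite mulr0. Qed.

Lemma ext_ge0 x k : (forall i, 0 <= x i) -> 0 <= ext x k.
Proof. by rewrite /ext; case: ltnP. Qed.

Lemma selfconv_scale t x i :
  selfconv (fun i => t * x i) i = t ^+ 2 * selfconv x i.
Proof.
rewrite /selfconv mulr_sumr; apply: eq_bigr => j _.
rewrite !ext_scale; ring.
Qed.

Lemma selfconv_ge0 x i : (forall i, 0 <= x i) -> 0 <= selfconv x i.
Proof.
move=> H; apply: sumr_ge0 => j _; apply: mulr_ge0; exact: ext_ge0.
Qed.

Lemma sum_selfconv x :
  \sum_(i < (m.*2).+1) selfconv x i = (\sum_(i < m.+1) x i) ^+ 2.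
Proof.
pose p : {poly R} := \poly_(i < m.+1) ext x i.
have cp k : p`_k = ext x k.
  rewrite coef_poly; case: ltnP => // H; by rewrite ext_out.
have sp : (size (p * p)%R <= (m.*2).+1)%N.
  apply: (leq_trans (size_polyMleq p p)).
  have h : (size p <= m.+1)%N by exact: size_poly.
  rewrite -addnn; lia.
have e1 : (p * p).[1] = \sum_(i < (m.*2).+1) selfconv x i.
  rewrite (horner_coef_wide _ sp); apply: eq_bigr => i _.
  rewrite expr1n mulr1 coefM /selfconv.
  rewrite (reindex_inj rev_ord_inj) /=; apply: eq_bigr => j _.
  rewrite !cp subKn; last by rewrite -ltnS.
  by rewrite mulrC.
have e2 : p.[1] = \sum_(i < m.+1) x i.
  rewrite (horner_coef_wide _ (size_poly _ _)); apply: eq_bigr => i _.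
  by rewrite expr1n mulr1 cp ext_ord.
by rewrite -e1 hornerM e2 expr2.
Qed.

Lemma selfconv1_gt0 i : 0 < selfconv (fun _ : 'I_m.+1 => 1 : R) i.
Proof.
have hi : (nat_of_ord i <= m + m)%N by rewrite addnn -ltnS ltn_ord.
pose j0 : 'I_i.+1 := @inord i (minn i m).
have vj : nat_of_ord j0 = minn i m by rewrite /j0 inordK // ltnS geq_minl.
rewrite /selfconv (bigD1 j0) //=.
have h1 : ext (fun _ : 'I_m.+1 => 1 : R) (i - j0) = 1.
  rewrite /ext; case: ltnP => // H; exfalso; move: H; rewrite vj; lia.
have h2 : ext (fun _ : 'I_m.+1 => 1 : R) j0 = 1.
  rewrite /ext; case: ltnP => // H; exfalso; move: H; rewrite vj; lia.
rewrite h1 h2 mulr1; apply: (lt_le_trans ltr01); rewrite lerDl.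
apply: sumr_ge0 => j _; apply: mulr_ge0; exact: ext_ge0.
Qed.

Lemma ln_lb (s : R) : 0 < s -> 1 - s^-1 <= ln s.
Proof.
move=> s0.
have si : 0 < s^-1 by rewrite invr_gt0.
have := @le_ln1Dx R (s^-1 - 1).
have -> : 1 + (s^-1 - 1) = s^-1 by ring.
rewrite lnV ?posrE // => h.
have : -1 < s^-1 - 1 by lra.
move/h; lra.
Qed.
End H.

Theorem proposition2 (R : realType) (m : nat) (hm : (1 <= m)%N) :
  (forall x : 'I_m.+1 -> R,
      \sum_(i < (m.*2).+1) selfconv x i = (\sum_(i < m.+1) x i) ^+ 2) /\
  (forall (y : 'I_(m.*2).+1 -> R) (xs : 'I_m.+1 -> R),
      (forall i, 0 <= y i) ->
      (forall i, 0 <= xs i) ->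
      (forall x : 'I_m.+1 -> R, (forall i, 0 <= x i) ->
          (Idiv y (selfconv xs) <= Idiv y (selfconv x))%E) ->
      \sum_(i < (m.*2).+1) selfconv xs i = (\sum_(i < m.+1) xs i) ^+ 2 /\
      (\sum_(i < m.+1) xs i) ^+ 2 = \sum_(i < (m.*2).+1) y i).
Proof.
split; first exact: sum_selfconv.
move=> y xs y0 xs0 hmin.
split; first exact: sum_selfconv.
rewrite -sum_selfconv.
set v := selfconv xs.
have v0 i : 0 <= v i by exact: selfconv_ge0.
have cond : [forall i, (v i == 0) ==> (y i == 0)].
  apply/negPn/negP => nc.
  have := hmin (fun _ => 1) (fun _ => ler01).
  rewrite /Idiv -/v (negbTE nc).
  have -> : [forall i, (selfconv (fun _ : 'I_m.+1 => 1 : R) i == 0) ==> (y i == 0)].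
    by apply/forallP => i; rewrite (gt_eqF (selfconv1_gt0 _ _ i)).
  by rewrite leye_eq.
have cv i : y i != 0 -> 0 < v i.
  move=> yn; rewrite lt_neqAle v0 andbT eq_sym.
  by apply: contra yn => h; exact: (implyP (forallP cond i) h).
set Y := \sum_(i < (m.*2).+1) y i.
set V := \sum_(i < (m.*2).+1) v i.
have key : forall s, 0 < s -> 0 <= - Y * ln s + (s - 1) * V.
  move=> s s0.
  have := hmin (fun i => Num.sqrt s * xs i) (fun i => mulr_ge0 (sqrtr_ge0 _) (xs0 i)).
  have ev i : selfconv (fun i => Num.sqrt s * xs i) i = s * v i.
    by rewrite selfconv_scale sqr_sqrtr // ltW.
  rewrite /Idiv -/v cond.
  have -> : [forall i, (selfconv (fun i => Num.sqrt s * xs i) i == 0) ==> (y i == 0)].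
    apply/forallP => i; rewrite ev mulf_eq0 (gt_eqF s0) /=; exact: (forallP cond i).
  rewrite lee_fin.
  have pe i : (if y i == 0 then 0 else y i * ln (y i / selfconv (fun i => Num.sqrt s * xs i) i))
      - y i + selfconv (fun i => Num.sqrt s * xs i) i =
      ((if y i == 0 then 0 else y i * ln (y i / v i)) - y i + v i) + (- y i * ln s + (s - 1) * v i).
    rewrite ev; case: (eqVneq (y i) 0) => [->|yn]; first by rewrite ?eqxx; ring.
    have vp := cv i yn.
    have yp : 0 < y i by rewrite lt_neqAle eq_sym yn y0.
    rewrite !ln_div ?posrE ?mulr_gt0 // lnM ?posrE //; ring.
  rewrite (eq_bigr _ (fun i _ => pe i)) => H.
  have E : \sum_(i < (m.*2).+1) (- y i * ln s + (s - 1) * v i) = - Y * ln s + (s - 1) * V.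
    by rewrite big_split /= -mulr_suml -mulr_sumr sumrN.
  by rewrite -E; move: H; rewrite [X in _ <= X]big_split /= lerDl.
have Y0 : 0 <= Y by apply: sumr_ge0.
have V0 : 0 <= V by apply: sumr_ge0.
case: (ltgtP V Y) => // hVY; exfalso.
- have YV : 0 < Y + V by lra.
  pose s := 2 * Y / (Y + V).
  have hs : s * (Y + V) = 2 * Y by rewrite /s mulfVK // gt_eqF.
  have s0 : 0 < s by rewrite /s divr_gt0 //; lra.
  have s1 : 1 < s by nra.
  have sV : s * V < Y by nra.
  have hl : 1 - s^-1 <= ln s by apply: ln_lb.
  have hl' : s - 1 <= s * ln s.
    have : s * (1 - s^-1) <= s * ln s by rewrite ler_pM2l.
    by rewrite mulrBr mulr1 mulfV ?gt_eqF.
  have k := key s s0.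
  have := mulr_ge0 (ltW s0) k.
  have h3 : 0 <= s * ln s - (s - 1) by rewrite subr_ge0.
  have := mulr_ge0 Y0 h3.
  have : 0 < (s - 1) * (Y - s * V) by apply: mulr_gt0; lra.
  nra.
- have V0' : 0 < V by lra.
  pose s := (Y + V) / (2 * V).
  have hs : s * (2 * V) = Y + V by rewrite /s mulfVK // gt_eqF //; lra.
  have s0 : 0 < s by rewrite /s divr_gt0 //; lra.
  have s1 : s < 1 by nra.
  have sV : Y < s * V by nra.
  have hl : 1 - s^-1 <= ln s by apply: ln_lb.
  have hl' : s - 1 <= s * ln s.
    have : s * (1 - s^-1) <= s * ln s by rewrite ler_pM2l.
    by rewrite mulrBr mulr1 mulfV ?gt_eqF.
  have k := key s s0.
  have := mulr_ge0 (ltW s0) k.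
  have h3 : 0 <= s * ln s - (s - 1) by rewrite subr_ge0.
  have := mulr_ge0 Y0 h3.
  have : 0 < (1 - s) * (s * V - Y) by apply: mulr_gt0; lra.
  nra.
Qed.
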